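(* Let $\mathcal{T}\subset\mathbb{R}^3$ be a conforming tetrahedral mesh that is 4-colorable, fix a 4-coloring of its vertices with colors $A,B,C,D$, fix time-slices $s_0<s_1<\dots<s_M$, and let $\mathcal{T}'\subset\mathbb{R}^4$ be the pentatope mesh produced from $\mathcal{T}$ by extrusion-subdivision according to the subdivision rule described in the context. Then $\mathcal{T}'$ admits a consistent tagging.
   Context: A 4-coloring of a tetrahedral mesh assigns to each vertex one of four labels $A,B,C,D$ so that no two vertices joined by an edge of the mesh share a label; in particular every tetrahedron has exactly one vertex of each color. For $r\in\mathbb{R}$ and $v=(a_0,a_1,a_2)\in\mathbb{R}^3$ let $\psi_r(v)=(a_0,a_1,a_2,r)\in\mathbb{R}^4$. Extrusion-subdivision (subdivision rule): for each tetrahedron $T\in\mathcal{T}$ with vertices $v_A,v_B,v_C,v_D$ (subscript = color) and each $i\in\{0,\dots,M-1\}$, put $x_X=\psi_{s_i}(v_X)$ and $x_X'=\psi_{s_{i+1}}(v_X)$ for $X\in\{A,B,C,D\}$. The prism $\operatorname{conv}(\psi_{s_i}(T),\psi_{s_{i+1}}(T))$ is subdivided into the four pentatopes $\tau_1=\operatorname{conv}(x_A,x_B,x_C,x_D,x_D')$, $\tau_2=\operatorname{conv}(x_A,x_B,x_C,x_C',x_D')$, $\tau_3=\operatorname{conv}(x_A,x_B,x_B',x_C',x_D')$, $\tau_4=\operatorname{conv}(x_A,x_A',x_B',x_C',x_D')$. The mesh $\mathcal{T}'$ consists of all these pentatopes over all $T\in\mathcal{T}$ and all $i$. A tagged pentatope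 is an ordering $(x_0,x_1,x_2,x_3,x_4)$ of the vertices of a pentatope together with an integer type $\gamma\in\{0,1,2,3\}$, written $t=(x_0,x_1,x_2,x_3,x_4)_\gamma$. Bisection rule: bisecting $t=(x_0,\dots,x_4)_\gamma$ along its refinement edge $\overline{x_0x_4}$ gives the children $t_1=(x_0,x',x_1,x_2,x_3)_{\gamma'}$ and $t_2=(x_4,x',x_3,x_2,x_1)_{\gamma'}$ if $\gamma=0$, $t_2=(x_4,x',x_1,x_3,x_2)_{\gamma'}$ if $\gamma=1$, $t_2=(x_4,x',x_1,x_2,x_3)_{\gamma'}$ if $\gamma\in\{2,3\}$, where $x'=(x_0+x_4)/2$ and $\gamma'=(\gamma+1)\bmod 4$. Reflection: $t_R=(x_4,x_3,x_2,x_1,x_0)_\gamma$ if $\gamma=0$, $t_R=(x_4,x_1,x_3,x_2,x_0)_\gamma$ if $\gamma=1$, $t_R=(x_4,x_1,x_2,x_3,x_0)_\gamma$ if $\gamma\in\{2,3\}$. Two tagged pentatopes $t,t'$ are reflected neighbors if they share a common hyperface (3-dimensional face), have the same type, and the vertex order of $t'$ agrees with the vertex order of $t$ or of $t_R$ in all but one position. Two tagged pentatopes $t=(x_0,\dots,x_4)_\gamma$, $t'=(x_0',\dots,x_4')_\gamma$ of the same type sharing a hyperface are consistently tagged if: (1) when $\overline{x_0x_4}$ or $\overline{x_0'x_4'}$ is contained in the shared hyperface, $t$ and $t'$ are reflected neighbors; (2) otherwise, the child of $t$ and the child of $t'$ (under the bisection rule) that share the common hyperface are reflected neighbors. A consistent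 tagging of a mesh is a choice of tag for every pentatope of the mesh such that any two neighboring (hyperface-sharing) pentatopes are consistently tagged. *)

(* Defs.v *)
From HB Require Import structures.
From mathcomp Require Import all_boot all_order all_algebra all_fingroup.
From mathcomp Require Import reals.
Set Implicit Arguments. Unset Strict Implicit. Unset Printing Implicit Defensive.
Import Order.TTheory GRing.Theory Num.Theory.
Local Open Scope ring_scope.

Section Defs.
Variable R : realType.

Definition pt3 := 'rV[R]_3.
Definition pt4 := 'rV[R]_4.

Definition tetra := 'I_4 -> pt3.

Definition nondegenerate (K : tetra) : Prop :=
  \det (\matrix_(i < 3, j < 3) (K (lift ord0 i) 0 j - K ord0 0 j)) != 0.

Definition is_vertex (K : tetra) (p : pt3) : Prop := exists i, K i = p.

Definition in_conv (K : tetra) (x : pt3) : Prop :=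
  exists w : 'I_4 -> R, (forall i, 0 <= w i) /\ \sum_i w i = 1 /\
    x = \sum_i w i *: K i.

Definition in_conv_common (K L : tetra) (x : pt3) : Prop :=
  exists w : 'I_4 -> R, (forall i, 0 <= w i) /\ \sum_i w i = 1 /\
    (forall i, w i != 0 -> is_vertex L (K i)) /\
    x = \sum_i w i *: K i.

Definition dflt_tetra : tetra := fun _ => 0.

(* Conforming tetrahedral mesh: non-degenerate, pairwise distinct tetrahedra,
   any two of which intersect exactly in the convex hull of their common
   vertices (a common face, or the empty set). *)
Definition conforming_mesh (T : seq tetra) : Prop :=
  (forall k, (k < size T)%N -> nondegenerate (nth dflt_tetra T k)) /\
  (forall k l, (k < size T)%N -> (l < size T)%N -> k <> l ->
     let K := nth dflt_tetra T k in let L := nth dflt_tetra T l in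
     (exists i, ~ is_vertex L (K i)) /\
     (forall x, (in_conv K x /\ in_conv L x) <-> in_conv_common K L x)).

(* colors A,B,C,D are 0,1,2,3; adjacent vertices (two distinct vertices of a
   common tetrahedron) get distinct colors *)
Definition four_coloring (T : seq tetra) (col : pt3 -> 'I_4) : Prop :=
  forall k, (k < size T)%N -> let K := nth dflt_tetra T k in
    forall i j, i != j -> col (K i) != col (K j).

Definition colvert (col : pt3 -> 'I_4) (K : tetra) (X : 'I_4) : pt3 :=
  K (odflt ord0 [pick i | col (K i) == X]).

Definition psi (r : R) (v : pt3) : pt4 :=
  \row_(i < 4) (if (i : nat) == 3%N then r else v 0 (inord i)).

Definition pentatope := 'I_5 -> pt4.

Definition mk5 (a b c d e : pt4) : pentatope :=
  fun i => nth a [:: a; b; c; d; e] i.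

Definition cA : 'I_4 := inord 0.
Definition cB : 'I_4 := inord 1.
Definition cC : 'I_4 := inord 2.
Definition cD : 'I_4 := inord 3.

Definition prism_split (col : pt3 -> 'I_4) (s : nat -> R) (K : tetra) (i : nat)
  : seq pentatope :=
  let x X := psi (s i) (colvert col K X) in
  let x' X := psi (s i.+1) (colvert col K X) in
  [:: mk5 (x cA) (x cB) (x cC) (x cD) (x' cD);
      mk5 (x cA) (x cB) (x cC) (x' cC) (x' cD);
      mk5 (x cA) (x cB) (x' cB) (x' cC) (x' cD);
      mk5 (x cA) (x' cA) (x' cB) (x' cC) (x' cD)].

Definition extrude (T : seq tetra) (col : pt3 -> 'I_4) (s : nat -> R) (M : nat)
  : seq pentatope :=
  flatten [seq flatten [seq prism_split col s K i | i <- iota 0 M] | K <- T].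

(* tagged pentatope: vertex ordering (x_0,...,x_4) and type gamma *)
Definition tagged := (pentatope * nat)%type.

Definition tv (t : tagged) (i : nat) : pt4 := t.1 (inord i).

Definition bisect (t : tagged) : tagged * tagged :=
  let: (x, g) := t in
  let x0 := tv t 0 in let x1 := tv t 1 in let x2 := tv t 2 in
  let x3 := tv t 3 in let x4 := tv t 4 in
  let x' := 2^-1 *: (x0 + x4) in
  let g' := ((g + 1) %% 4)%N in
  ((mk5 x0 x' x1 x2 x3, g'),
   ((if g == 0%N then mk5 x4 x' x3 x2 x1
     else if g == 1%N then mk5 x4 x' x1 x3 x2
     else mk5 x4 x' x1 x2 x3), g')).

Definition reflection (t : tagged) : tagged :=
  let: (x, g) := t in
  let x0 := tv t 0 in let x1 := tv t 1 in let x2 := tv t 2 in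
  let x3 := tv t 3 in let x4 := tv t 4 in
  ((if g == 0%N then mk5 x4 x3 x2 x1 x0
    else if g == 1%N then mk5 x4 x1 x3 x2 x0
    else mk5 x4 x1 x2 x3 x0), g).

Definition is_vert4 (t : tagged) (p : pt4) : bool := [exists i, t.1 i == p].

Definition share_hyperface (t t' : tagged) : Prop :=
  exists i j : 'I_5,
    (forall p, (exists k, k != i /\ t.1 k = p) <-> (exists k, k != j /\ t'.1 k = p))
    /\ t.1 i <> t'.1 j.

Definition agree_but_one (x y : pentatope) : Prop :=
  exists k : 'I_5, forall i, i != k -> y i = x i.

Definition reflected_neighbors (t t' : tagged) : Prop :=
  share_hyperface t t' /\ t.2 = t'.2 /\
  (agree_but_one t.1 t'.1 \/ agree_but_one (reflection t).1 t'.1).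

(* the child of t containing the hyperface shared with t' (used when the
   refinement edge of t is not in that hyperface, so exactly one endpoint is) *)
Definition child_toward (t t' : tagged) : tagged :=
  if is_vert4 t' (tv t 0) then (bisect t).1 else (bisect t).2.

(* refinement edge of t contained in the hyperface it shares with t'
   (the shared hyperface is the set of common vertices) *)
Definition edge_in_shared (t t' : tagged) : Prop :=
  is_vert4 t' (tv t 0) /\ is_vert4 t' (tv t 4).

Definition consistently_tagged (t t' : tagged) : Prop :=
  t.2 = t'.2 /\
  ((edge_in_shared t t' \/ edge_in_shared t' t) ->
      reflected_neighbors t t') /\
  (~ (edge_in_shared t t' \/ edge_in_shared t' t) ->
      reflected_neighbors (child_toward t t') (child_toward t' t)).

Definition dflt_pent : pentatope := fun _ => 0.

Definition tag_of (P : pentatope) (t : tagged) : Prop :=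
  (exists s : 'S_5, forall i, t.1 i = P (s i)) /\ (t.2 < 4)%N.

Definition consistent_tagging (Tp : seq pentatope) : Prop :=
  exists tag : nat -> tagged,
    (forall k, (k < size Tp)%N -> tag_of (nth dflt_pent Tp k) (tag k)) /\
    (forall k l, (k < size Tp)%N -> (l < size Tp)%N ->
       share_hyperface (tag k) (tag l) -> consistently_tagged (tag k) (tag l)).

End Defs.

(* Main.v *)
Require Import Defs.
From HB Require Import structures.
From mathcomp Require Import all_boot all_order all_algebra all_fingroup.
From mathcomp Require Import reals.
From mathcomp Require Import zify lra.
Set Implicit Arguments. Unset Strict Implicit. Unset Printing Implicit Defensive.
Import Order.TTheory GRing.Theory Num.Theory.

Section Gen.
Variable R : realType.


Lemma ord5P (k : 'I_5) : k = inord 0 \/ k = inord 1 \/ k = inord 2 \/ k = inord 3 \/ k = inord 4.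
Proof.
rewrite -(inord_val k); case: k => [[|[|[|[|[|k]]]]] Hk] //=; tauto.
Qed.

Lemma inord_eq (a b : nat) : (a < 5)%N -> (b < 5)%N -> ((inord a : 'I_5) == inord b) = (a == b).
Proof. by move=> Ha Hb; rewrite -val_eqE /= !inordK. Qed.

Lemma mk5E (a b c d e : pt4 R) :
  [/\ mk5 a b c d e (inord 0) = a, mk5 a b c d e (inord 1) = b,
      mk5 a b c d e (inord 2) = c, mk5 a b c d e (inord 3) = d &
      mk5 a b c d e (inord 4) = e].
Proof. by rewrite /mk5 !inordK. Qed.

Lemma m50 (a b c d e : pt4 R) : mk5 a b c d e (inord 0) = a. Proof. by rewrite /mk5 inordK. Qed.
Lemma m51 (a b c d e : pt4 R) : mk5 a b c d e (inord 1) = b. Proof. by rewrite /mk5 inordK. Qed.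
Lemma m52 (a b c d e : pt4 R) : mk5 a b c d e (inord 2) = c. Proof. by rewrite /mk5 inordK. Qed.
Lemma m53 (a b c d e : pt4 R) : mk5 a b c d e (inord 3) = d. Proof. by rewrite /mk5 inordK. Qed.
Lemma m54 (a b c d e : pt4 R) : mk5 a b c d e (inord 4) = e. Proof. by rewrite /mk5 inordK. Qed.

Ltac ordcase k := case: (ord5P k) => [->|[->|[->|[->|->]]]].
Ltac neqo := rewrite ?inord_eq //.

Lemma RN (x y : pentatope R) g q :
  (forall r, r != q -> y r = x r) -> x q <> y q -> reflected_neighbors (x, g) (y, g).
Proof.
move=> H Hq; split; last split => //; last by left; exists q.
exists q, q; split => //= p; split=> -[k [Hk <-]]; exists k; split => //.
  by rewrite H. by rewrite H.
Qed.

Lemma RNR (x y : pentatope R) :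
  y (inord 0) = x (inord 4) -> y (inord 2) = x (inord 3) ->
  y (inord 3) = x (inord 2) -> y (inord 4) = x (inord 0) ->
  x (inord 1) <> y (inord 1) -> reflected_neighbors (x, 1%N) (y, 1%N).
Proof.
move=> H0 H2 H3 H4 H1; split; last split => //; last first.
  right; exists (inord 1) => i; rewrite /reflection /tv /=.
  case: (mk5E (x (inord 4)) (x (inord 1)) (x (inord 3)) (x (inord 2)) (x (inord 0))) => E0 E1 E2 E3 E4.
  by ordcase i; neqo => _; rewrite ?E0 ?E2 ?E3 ?E4.
exists (inord 1), (inord 1); split => //= p; split=> -[k [Hk <-]].
  move: Hk; ordcase k; neqo => _.
  - by exists (inord 4); rewrite H4; neqo.
  - by exists (inord 3); rewrite H3; neqo.
  - by exists (inord 2); rewrite H2; neqo.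
  - by exists (inord 0); rewrite H0; neqo.
move: Hk; ordcase k; neqo => _.
- by exists (inord 4); rewrite H0; neqo.
- by exists (inord 3); rewrite H2; neqo.
- by exists (inord 2); rewrite H3; neqo.
- by exists (inord 0); rewrite H4; neqo.
Qed.


Lemma half_neq (a b c d : pt4 R) : (a + b <> c + d -> 2^-1 *: (a + b) <> 2^-1 *: (c + d))%R.
Proof.
move=> H E; apply: H; apply: (scalerI (a := 2^-1)) => //.
by rewrite invr_eq0 pnatr_eq0.
Qed.

Lemma lemA (P P' : pentatope R) (q : 'I_5) :
  injective P -> injective P' -> (forall r, r != q -> P' r = P r) -> P q <> P' q ->
  share_hyperface (P, 0%N) (P', 0%N) -> consistently_tagged (P, 0%N) (P', 0%N).
Proof.
move=> iP iP' H Hq Hsh; split => //; split.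
  by move=> _; apply: (@RN P P' 0%N q).
move=> Hne.
have V0 : forall k, (k < 5)%N -> inord k != q -> is_vert4 (P', 0%N) (P (inord k)).
  by move=> k Hk Hkq; apply/existsP; exists (inord k); rewrite /= H.
have NV : ~~ is_vert4 (P', 0%N) (P q).
  apply/existsP => -[r /eqP /= E]; case: (eqVneq r q) => [Erq|Nrq].
    by apply: Hq; rewrite -E Erq.
  by move: (E); rewrite H // => /iP Erq; move: Nrq; rewrite Erq eqxx.
have NV' : ~~ is_vert4 (P, 0%N) (P' q).
  apply/existsP => -[r /eqP /= E]; case: (eqVneq r q) => [Erq|Nrq].
    by apply: Hq; rewrite -E Erq.
  have E2 : P' r = P' q by rewrite H.
  by move/iP': E2 => Erq; move: Nrq; rewrite Erq eqxx.
move: H Hq V0 NV NV' Hne; ordcase q; move=> H Hq V0 NV NV' Hne.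
- rewrite /child_toward /tv /= (negbTE NV) (negbTE NV') /bisect /=.
  apply: (@RN _ _ _ (inord 1)).
    move=> r; ordcase r; neqo => _; rewrite ?m50 ?m51 ?m52 ?m53 ?m54 ?H //; neqo.
  rewrite m51 m51; apply: half_neq; rewrite (H (inord 4)); last by neqo.
  by move/addIr.
- exfalso; apply: Hne; left; split; [apply: V0 | apply: V0] => //; neqo.
- exfalso; apply: Hne; left; split; [apply: V0 | apply: V0] => //; neqo.
- exfalso; apply: Hne; left; split; [apply: V0 | apply: V0] => //; neqo.
rewrite /child_toward /tv /= V0 //; last by neqo.
have -> : is_vert4 (P, 0%N) (P' (inord 0)).
  by apply/existsP; exists (inord 0); rewrite /= H //; neqo.
rewrite /bisect /=.
apply: (@RN _ _ _ (inord 1)).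
  move=> r; ordcase r; neqo => _; rewrite ?m50 ?m51 ?m52 ?m53 ?m54 ?H //; neqo.
rewrite m51 m51; apply: half_neq; rewrite (H (inord 0)); last by neqo.
by move/addrI.
Qed.


Lemma ninord (a b : nat) : (a < 5)%N -> (b < 5)%N -> a != b -> (inord a : 'I_5) <> inord b.
Proof. by move=> Ha Hb Hab E; move: Hab; rewrite -(inord_eq Ha Hb) E eqxx. Qed.

Lemma lemC (P P' : pentatope R) :
  injective P -> injective P' ->
  (forall r, (r < 4)%N -> P' (inord r) = P (inord r.+1)) ->
  P' (inord 4) <> P (inord 0) ->
  (P (inord 0) + P (inord 4) <> P' (inord 0) + P' (inord 4))%R ->
  consistently_tagged (P, 0%N) (P', 0%N).
Proof.
move=> iP iP' H Hn Hm.
have NV1 : ~~ is_vert4 (P', 0%N) (P (inord 0)).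
  apply/existsP => -[r /eqP /=]; ordcase r => //; rewrite H // => /iP; exact: ninord.
have NV2 : ~~ is_vert4 (P, 0%N) (P' (inord 4)).
  apply/existsP => -[r /eqP /=]; ordcase r; first by move=> E; apply: Hn.
  1-4: rewrite -H // => /iP'; exact: ninord.
have V : is_vert4 (P, 0%N) (P' (inord 0)).
  by apply/existsP; exists (inord 1); rewrite /= H.
split => //; split.
  by rewrite /edge_in_shared /tv /= (negbTE NV1) (negbTE NV2) => -[[]|[]].
move=> _; rewrite /child_toward /tv /= (negbTE NV1) V /bisect /=.
apply: RNR; rewrite ?m50 ?m51 ?m52 ?m53 ?m54; last exact: half_neq.
all: by rewrite ?(H 0) ?(H 1) ?(H 2) ?(H 3).
Qed.

Lemma lemC' (P P' : pentatope R) :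
  injective P -> injective P' ->
  (forall r, (r < 4)%N -> P (inord r) = P' (inord r.+1)) ->
  P (inord 4) <> P' (inord 0) ->
  (P (inord 0) + P (inord 4) <> P' (inord 0) + P' (inord 4))%R ->
  consistently_tagged (P, 0%N) (P', 0%N).
Proof.
move=> iP iP' H Hn Hm.
have NV1 : ~~ is_vert4 (P', 0%N) (P (inord 4)).
  apply/existsP => -[r /eqP /=]; ordcase r; first by move=> E; apply: Hn.
  1-4: rewrite -H // => /iP; exact: ninord.
have NV2 : ~~ is_vert4 (P, 0%N) (P' (inord 0)).
  apply/existsP => -[r /eqP /=]; ordcase r => //; rewrite H // => /iP'; exact: ninord.
have V : is_vert4 (P', 0%N) (P (inord 0)).
  by apply/existsP; exists (inord 1); rewrite /= H.
split => //; split.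
  by rewrite /edge_in_shared /tv /= (negbTE NV1) (negbTE NV2) => -[[]|[]].
move=> _; rewrite /child_toward /tv /= (negbTE NV2) V /bisect /=.
apply: RNR; rewrite ?m50 ?m51 ?m52 ?m53 ?m54; last exact: half_neq.
all: by rewrite ?(H 0) ?(H 1) ?(H 2) ?(H 3).
Qed.

End Gen.

Definition tmo (j r : nat) : nat := if (4 <= r + j)%N then 1%N else 0%N.
Definition cln (j r : nat) : nat := if (4 <= r + j)%N then r.-1 else r.
Definition tc (d a b : nat) : bool :=
  if d == 0%N then a == b else if d == 1%N then a == b.+1 else a.+1 == b.
Definition km d j j' r r' := tc d (tmo j r) (tmo j' r') && (cln j r == cln j' r').
Definition compat d j j' i0 j0 :=
  all (fun r => (r == i0) || has (fun r' => (r' != j0) && km d j j' r r') (iota 0 5)) (iota 0 5).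
Definition R1 d j j' i0 j0 := (i0 == j0) && all (fun r => (r == i0) || km d j j' r r) (iota 0 5).
Definition R2 (d j j' i0 j0 : nat) := [&& d == 1, j == 3, j' == 0, i0 == 0 & j0 == 4]%N.
Definition R3 (d j j' i0 j0 : nat) := [&& d == 2, j == 0, j' == 3, i0 == 4 & j0 == 0]%N.
Definition F1 := all (fun d => all (fun j => all (fun j' => all (fun i0 => all (fun j0 =>
  compat d j j' i0 j0 ==> [|| R1 d j j' i0 j0, R2 d j j' i0 j0 | R3 d j j' i0 j0])
  (iota 0 5)) (iota 0 5)) (iota 0 4)) (iota 0 4)) (iota 0 3).
Definition F2 := all (fun d => all (fun j => all (fun j' => all (fun r => all (fun r' => all (fun r'' =>
  km d j j' r r' ==> km d j j' r r'' ==> (r' == r''))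
  (iota 0 5)) (iota 0 5)) (iota 0 5)) (iota 0 4)) (iota 0 4)) (iota 0 3).
Lemma F1T : F1. Proof. by []. Qed.
Lemma F2T : F2. Proof. by []. Qed.

Lemma iotaP n m : (m < n)%N -> m \in iota 0 n.
Proof. by rewrite mem_iota. Qed.

Lemma F1L d j j' i0 j0 : (d < 3)%N -> (j < 4)%N -> (j' < 4)%N -> (i0 < 5)%N -> (j0 < 5)%N ->
  compat d j j' i0 j0 -> [|| R1 d j j' i0 j0, R2 d j j' i0 j0 | R3 d j j' i0 j0].
Proof.
move=> /iotaP Hd /iotaP Hj /iotaP Hj' /iotaP Hi /iotaP Hj0.
by move: F1T => /allP/(_ _ Hd)/allP/(_ _ Hj)/allP/(_ _ Hj')/allP/(_ _ Hi)/allP/(_ _ Hj0)/implyP.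
Qed.

Lemma F2L d j j' r r' r'' : (d < 3)%N -> (j < 4)%N -> (j' < 4)%N -> (r < 5)%N -> (r' < 5)%N ->
  (r'' < 5)%N -> km d j j' r r' -> km d j j' r r'' -> r' = r''.
Proof.
move=> /iotaP Hd /iotaP Hj /iotaP Hj' /iotaP Hi /iotaP Hj0 /iotaP Hr.
move: F2T => /allP/(_ _ Hd)/allP/(_ _ Hj)/allP/(_ _ Hj')/allP/(_ _ Hi)/allP/(_ _ Hj0)/allP/(_ _ Hr).
by move=> /implyP H /H /implyP H' /H' /eqP.
Qed.

Lemma cln_lt j r : (j < 4)%N -> (r < 5)%N -> (cln j r < 4)%N.
Proof. by rewrite /cln; case: ifP; case: r => [|[|[|[|[|?]]]]] //=; case: j => [|[|[|[|?]]]]. Qed.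

Lemma tmo_le j r : (tmo j r <= 1)%N.
Proof. by rewrite /tmo; case: ifP. Qed.

Lemma nth_flatten_ex (A : Type) (x0 : A) (L : seq (seq A)) k :
  (k < size (flatten L))%N -> exists a b, [/\ (a < size L)%N, (b < size (nth [::] L a))%N &
    nth x0 (flatten L) k = nth x0 (nth [::] L a) b].
Proof.
elim: L k => [|l L IH] k //=; rewrite size_cat nth_cat => Hs.
case: (ltnP k (size l)) => Hk.

  by exists 0%N, k.
have [a [b [Ha Hb E]]] : exists a b, [/\ (a < size L)%N, (b < size (nth [::] L a))%N &
    nth x0 (flatten L) (k - size l) = nth x0 (nth [::] L a) b].
  by apply: IH; rewrite ltn_subLR.
by exists a.+1, b.
Qed.

Ltac ordcase k := case: (ord5P k) => [->|[->|[->|[->|->]]]].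
Ltac neqo := rewrite ?inord_eq //.

Section Main.
Variable R : realType.

Lemma ext_nth (T : seq (tetra R)) col s M k :
  (k < size (extrude T col s M))%N -> exists kk i j, [/\ (kk < size T)%N, (i < M)%N, (j < 4)%N &
   nth (@dflt_pent R) (extrude T col s M) k =
   nth (@dflt_pent R) (prism_split col s (nth (@dflt_tetra R) T kk) i) j].
Proof.
rewrite /extrude => /(nth_flatten_ex (@dflt_pent R)) [a [b [Ha Hb E]]].
rewrite size_map in Ha.
rewrite (nth_map (@dflt_tetra R)) // in Hb E.
move: Hb E => /(nth_flatten_ex (@dflt_pent R)) [c [d [Hc Hd E']]] E.
rewrite size_map size_iota in Hc.
rewrite (nth_map 0%N) ?size_iota // nth_iota // add0n in Hd E'.
by exists a, c, d; split => //; rewrite E E'.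
Qed.

Lemma pentE col s (K : tetra R) i j (r : 'I_5) : (j < 4)%N ->
  nth (@dflt_pent R) (prism_split col s K i) j r =
  psi (s (i + tmo j r)%N) (colvert col K (inord (cln j r))).
Proof.
case: j => [|[|[|[|?]]]] // _; ordcase r;
  rewrite /prism_split /= ?m50 ?m51 ?m52 ?m53 ?m54 inordK //= ?addn0 ?addn1.
all: by []. Qed.


Lemma colvertE (T : seq (tetra R)) col kk X : four_coloring T col -> (kk < size T)%N ->
  col (colvert col (nth (@dflt_tetra R) T kk) X) = X.
Proof.
move=> Hc Hk; set K := nth _ T kk.
have inj : injective (fun i => col (K i)).
  move=> a b E; case: (eqVneq a b) => // Hab.
  by move: (Hc kk Hk a b Hab); rewrite /= -/K E eqxx.
have /codomP [i Hi] := injF_onto inj X.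
rewrite /colvert; case: pickP => [i' /eqP //|H].
by move: (H i); rewrite /= -Hi eqxx.
Qed.

Lemma psi3 (a : R) v : psi a v ord0 (inord 3) = a.
Proof. by rewrite /psi mxE inordK. Qed.

Lemma psi_inj (a b : R) v w : psi a v = psi b w -> a = b /\ v = w.
Proof.
move=> E; split; first by have := congr1 (fun m : pt4 R => m ord0 (inord 3)) E; rewrite !psi3.
apply/rowP => c; have := congr1 (fun m : pt4 R => m ord0 (inord c)) E.
have Hc : (c < 4)%N by apply: (ltn_trans (ltn_ord c)).
rewrite /psi !mxE inordK // ltn_eqF //.
by rewrite inord_val.
Qed.

Lemma smono (s : nat -> R) M : (forall i, (i < M)%N -> (s i < s i.+1)%R) ->
  forall a b, (a < b)%N -> (b <= M)%N -> (s a < s b)%R.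
Proof.
move=> hs a; elim => [|b IH] // Hab HbM.
have hb : (s b < s b.+1)%R by apply: hs.
move: Hab; rewrite ltnS leq_eqVlt => /orP [/eqP ->|Hlt]; first exact: hb.
apply: (lt_trans _ hb); apply: IH => //; exact: ltnW.
Qed.

Lemma keyeq (T : seq (tetra R)) col (s : nat -> R) M kk kk' t1 t2 c1 c2 :
  four_coloring T col -> (forall i, (i < M)%N -> (s i < s i.+1)%R) ->
  (kk < size T)%N -> (kk' < size T)%N -> (t1 <= M)%N -> (t2 <= M)%N -> (c1 < 4)%N -> (c2 < 4)%N ->
  psi (s t1) (colvert col (nth (@dflt_tetra R) T kk) (inord c1)) =
  psi (s t2) (colvert col (nth (@dflt_tetra R) T kk') (inord c2)) -> t1 = t2 /\ c1 = c2.
Proof.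
move=> Hc hs Hk Hk' H1 H2 Hc1 Hc2 /psi_inj [Es Ev]; split.
  case: (ltngtP t1 t2) => // H; move: Es.
    by move=> E; have := smono hs H H2; rewrite E ltxx.
  by move=> E; have := smono hs H H1; rewrite E ltxx.
have := congr1 col Ev; rewrite !(colvertE _ Hc) // => /(congr1 val).
by rewrite /= !inordK.
Qed.


Lemma pairL (T : seq (tetra R)) col (s : nat -> R) M kk kk' i i' j j' (P P' : pentatope R) :
  four_coloring T col -> (forall i, (i < M)%N -> (s i < s i.+1)%R) ->
  (kk < size T)%N -> (kk' < size T)%N -> (i < M)%N -> (i' < M)%N -> (j < 4)%N -> (j' < 4)%N ->
  (forall r : 'I_5, P r = psi (s (i + tmo j r)%N) (colvert col (nth (@dflt_tetra R) T kk) (inord (cln j r)))) ->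
  (forall r : 'I_5, P' r = psi (s (i' + tmo j' r)%N) (colvert col (nth (@dflt_tetra R) T kk') (inord (cln j' r)))) ->
  share_hyperface (P, 0%N) (P', 0%N) -> consistently_tagged (P, 0%N) (P', 0%N).
Proof.
move=> Hc hs Hkk Hkk' Hi Hi' Hj Hj' HP HP' Hsh.
have tb : forall ii jj (r : 'I_5), (ii < M)%N -> (ii + tmo jj r <= M)%N.
  by move=> ii jj r Hii; have := tmo_le jj r; lia.
have KG : forall ii ii' jj jj' q q' (r r' : 'I_5), (ii < M)%N -> (ii' < M)%N -> (jj < 4)%N -> (jj' < 4)%N ->
  (q < size T)%N -> (q' < size T)%N ->
  psi (s (ii + tmo jj r)%N) (colvert col (nth (@dflt_tetra R) T q) (inord (cln jj r))) =
  psi (s (ii' + tmo jj' r')%N) (colvert col (nth (@dflt_tetra R) T q') (inord (cln jj' r'))) ->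
  (ii + tmo jj r = ii' + tmo jj' r')%N /\ cln jj r = cln jj' r'.
  move=> ii ii' jj jj' q q' r r' Hii Hii' Hjj Hjj' Hq Hq'.
  move=> E; apply: (keyeq Hc hs Hq Hq' _ _ _ _ E); first [apply: tb | apply: cln_lt] => //.
have KE : forall r r', P r = P' r' -> (i + tmo j r = i' + tmo j' r')%N /\ cln j r = cln j' r'.
  by move=> r r'; rewrite HP HP'; apply: KG.
have iP : injective P.
  move=> r r'; rewrite !HP => /KG [] // /addnI Et Ec; apply/val_inj.
  apply: (@F2L 0 j j r); rewrite ?ltn_ord //; rewrite /km /tc /= ?Et ?Ec ?eqxx //.
have iP' : injective P'.
  move=> r r'; rewrite !HP' => /KG [] // /addnI Et Ec; apply/val_inj.
  apply: (@F2L 0 j' j' r); rewrite ?ltn_ord //; rewrite /km /tc /= ?Et ?Ec ?eqxx //.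
have Hsh' := Hsh; case: Hsh' => i0 [j0 [Hface Hneq]]; rewrite /= in Hface Hneq.
have FW : forall r, r != i0 -> exists k', k' != j0 /\ P' k' = P r.
  by move=> r Hr; apply: (Hface (P r)).1; exists r.
have [r0 Hr0] : exists r0 : 'I_5, r0 != i0.
  case: (eqVneq i0 (inord 0)) => [->|H]; first by exists (inord 1); neqo.
  by exists (inord 0); rewrite eq_sym.
have [k0 [_ E0]] := FW r0 Hr0; have [Et0 _] := KE _ _ (esym E0).
have le1 := tmo_le j r0; have le2 := tmo_le j' k0.
have [d [Hd D1 D2 TC]] : exists d, [/\ (d < 3)%N, (d == 1)%N -> i' = i.+1, (d == 2)%N -> i = i'.+1 &
   forall a b, (a <= 1)%N -> (b <= 1)%N -> (i + a = i' + b)%N <-> tc d a b].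
  case: (ltngtP i' i) => H.
  - exists 2%N; split => //; first by move=> _; lia.
    by move=> a b Ha Hb; rewrite /tc /=; split => [E|/eqP E]; [apply/eqP|]; lia.
  - exists 1%N; split => //; first by move=> _; lia.
    by move=> a b Ha Hb; rewrite /tc /=; split => [E|/eqP E]; [apply/eqP|]; lia.
  - exists 0%N; split => //.
    by move=> a b Ha Hb; rewrite /tc /=; split => [E|/eqP E]; [apply/eqP|]; lia.
have Hcomp : compat d j j' i0 j0.
  apply/allP => r; rewrite mem_iota add0n => Hr; apply/orP.
  case: (eqVneq r i0) => [->|Hne]; [by left | right].
  have Hr' : inord r != i0 by rewrite -val_eqE /= inordK.
  have [k' [Hk' E]] := FW _ Hr'; have [Et Ec] := KE _ _ (esym E).
  rewrite inordK // in Et Ec.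
  apply/hasP; exists (val k'); first by rewrite mem_iota ltn_ord.
  rewrite val_eqE Hk' /km Ec eqxx andbT /=.
  by apply/(TC _ _ (tmo_le _ _) (tmo_le _ _)).
have EQ : forall r : 'I_5, r != i0 -> forall r' : 'I_5, km d j j' r r' -> P r = P' r'.
  move=> r Hr r' Hkm; have [k' [Hk' E]] := FW r Hr; have [Et Ec] := KE _ _ (esym E).
  have Hkm' : km d j j' r k'.
    by rewrite /km Ec eqxx andbT; apply/(TC _ _ (tmo_le _ _) (tmo_le _ _)).
  have := F2L Hd Hj Hj' (ltn_ord r) (ltn_ord r') (ltn_ord k') Hkm Hkm'.
  by move/val_inj => ->.
have midneq : forall u v u' v' : pt4 R,
    (u ord0 (inord 3) + v ord0 (inord 3) <> u' ord0 (inord 3) + v' ord0 (inord 3))%R ->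
    (u + v <> u' + v')%R.
  by move=> u v u' v' H E; apply: H; have := congr1 (fun m : pt4 R => m ord0 (inord 3)) E; rewrite !mxE.
case/orP: (F1L Hd Hj Hj' (ltn_ord i0) (ltn_ord j0) Hcomp) => [H1|/orP [H2|H3]].
- move: H1 => /andP [/eqP Eij /allP Hall].
  have Eo : j0 = i0 by apply/val_inj.
  subst j0.
  apply: (@lemA R P P' i0 iP iP') => // r Hr; symmetry; apply: EQ => //.
  have := Hall (val r); rewrite mem_iota ltn_ord => /(_ isT).
  by rewrite val_eqE (negbTE Hr).
- move: H2 => /and5P [/eqP d1 /eqP j3 /eqP j'0 /eqP i00 /eqP j04].
  subst d j j'; have Ei := D1 (eqxx _); subst i'.
  have Ei0 : i0 = inord 0 by apply/val_inj; rewrite /= inordK.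
  have Ej0 : j0 = inord 4 by apply/val_inj; rewrite /= inordK.
  subst i0 j0.
  apply: lemC => //.
  + move=> r Hr; symmetry; apply: EQ; first by rewrite inord_eq.
    by rewrite !inordK //; case: r Hr => [|[|[|[|?]]]].
  + by move=> E; apply: Hneq; rewrite E.
  apply: midneq; rewrite !HP !HP' !psi3 !inordK //= /tmo /= !addn0 !addn1.
  have h := @smono s M hs i i.+2 (leqnSn _) Hi'.
  rewrite [X in _ <> X]addrC => /addIr E; by move: h; rewrite E ltxx.
- move: H3 => /and5P [/eqP d1 /eqP j3 /eqP j'0 /eqP i00 /eqP j04].
  subst d j j'; have Ei := D2 (eqxx _); subst i.
  have Ei0 : i0 = inord 4 by apply/val_inj; rewrite /= inordK.
  have Ej0 : j0 = inord 0 by apply/val_inj; rewrite /= inordK.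
  subst i0 j0.
  apply: lemC' => //.
  + move=> r Hr; apply: EQ; first by rewrite inord_eq //; case: r Hr => [|[|[|[|?]]]].
    by rewrite !inordK //; case: r Hr => [|[|[|[|?]]]].
  apply: midneq; rewrite !HP !HP' !psi3 !inordK //= /tmo /= !addn0 !addn1.
  have h := @smono s M hs i' i'.+2 (leqnSn _) Hi.
  rewrite [X in X <> _]addrC => /addIr E; by move: h; rewrite E ltxx.
Qed.

End Main.

Theorem proposition1 (R : realType) (T : seq (tetra R)) (col : pt3 R -> 'I_4)
  (M : nat) (s : nat -> R) :
  conforming_mesh T ->
  four_coloring T col ->
  (forall i, (i < M)%N -> (s i < s i.+1)%R) ->
  consistent_tagging (extrude T col s M).
Proof.
move=> _ Hcol hs.
exists (fun k => (nth (@dflt_pent R) (extrude T col s M) k, 0%N)); split.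
  by move=> k _; split => //; exists 1%g => i; rewrite perm1.
move=> k l Hk Hl Hsh.
have [kk [i [j [Hkk Hi Hj Ek]]]] := ext_nth Hk.
have [kk' [i' [j' [Hkk' Hi' Hj' El]]]] := ext_nth Hl.
apply: (pairL Hcol hs Hkk Hkk' Hi Hi' Hj Hj') => // r.
  by rewrite Ek pentE.
by rewrite El pentE.
Qed.
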